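(* Let $\mathcal{H}\subseteq\{0,1\}^{\mathcal{X}}$ with $|\mathcal{H}|>2$. For any learning algorithm $\hat h_n$ there exists a realizable distribution $P$ such that $\mathbf{E}[\mathrm{er}_P(\hat h_n)]\ge 2^{-n-2}$ for infinitely many $n$. In particular, $\mathcal{H}$ is not learnable at rate faster than $e^{-n}$.
   Context: $\mathrm{er}_P(h)=P\{(x,y):h(x)\ne y\}$ for a distribution $P$ on $\mathcal{X}\times\{0,1\}$; $P$ is realizable if $\inf_{h\in\mathcal{H}}\mathrm{er}_P(h)=0$. A learning algorithm is a sequence of (universally measurable) maps $H_n:(\mathcal{X}\times\{0,1\})^n\times\mathcal{X}\to\{0,1\}$ with $\hat h_n(x)=H_n((X_1,Y_1),\ldots,(X_n,Y_n),x)$ for i.i.d. $(X_i,Y_i)\sim P$. ''Not learnable at rate faster than $R$'' means that for every learning algorithm there exist a realizable $P$ and $C,c>0$ with $\mathbf{E}[\mathrm{er}_P(\hat h_n)]\ge CR(cn)$ for infinitely many $n$. *)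

(* Defs.v *)
From HB Require Import structures.
From mathcomp Require Import all_boot all_order all_algebra.
From mathcomp Require Import all_classical all_reals all_analysis.
Set Implicit Arguments.
Unset Strict Implicit.
Unset Printing Implicit Defensive.
Import Order.TTheory GRing.Theory Num.Theory.
Local Open Scope classical_set_scope.
Local Open Scope ring_scope.
Local Open Scope ereal_scope.

(* Universal measurability: f^-1(B) lies in the mu-completion of the
   sigma-algebra of T for every probability measure mu on T and every
   measurable B. *)
Definition universally_measurable (R : realType) (d1 d2 : measure_display)
  (T : measurableType d1) (U : measurableType d2) (f : T -> U) : Prop :=
  forall (mu : probability T R) (B : set U), measurable B ->
    exists A1 A2 : set T, [/\ measurable A1, measurable A2,
      A1 `<=` f @^-1` B, f @^-1` B `<=` A2 & mu (A2 `\` A1) = 0].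

Definition learning_algorithm (R : realType) (d : measure_display)
  (X : measurableType d) (A : forall n : nat, n.-tuple (X * bool)%type -> X -> bool)
  : Prop :=
  forall n : nat,
    @universally_measurable R _ _ (n.-tuple (X * bool)%type * X)%type bool
      (fun p => A n p.1 p.2).

(* er_P(h) = P{(x,y) : h x <> y}, written as the integral of the indicator
   (coincides with P of that set whenever it is measurable, and with the
   completed measure when it is P-completion measurable). *)
Definition er (R : realType) (d : measure_display) (X : measurableType d)
  (P : probability (X * bool)%type R) (h : X -> bool) : \bar R :=
  \int[P]_z ((h z.1 != z.2)%:R)%:E.

Definition realizable (R : realType) (d : measure_display) (X : measurableType d)
  (H : set (X -> bool)) (P : probability (X * bool)%type R) : Prop :=
  ereal_inf [set er P h | h in H] = 0.

(* Expectation of f(Z_1,...,Z_n) for Z_i i.i.d. ~ P, i.e. the integral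
   against the n-fold product P^n, written as an iterated integral. *)
Fixpoint iid_expect (R : realType) (d : measure_display) (T : measurableType d)
  (P : probability T R) (n : nat) : (n.-tuple T -> \bar R) -> \bar R :=
  match n return (n.-tuple T -> \bar R) -> \bar R with
  | 0 => fun f => f [tuple]
  | m.+1 => fun f => \int[P]_z iid_expect P (fun t : m.-tuple T => f [tuple of z :: t])
  end.

Definition expected_error (R : realType) (d : measure_display) (X : measurableType d)
  (A : forall n : nat, n.-tuple (X * bool)%type -> X -> bool)
  (P : probability (X * bool)%type R) (n : nat) : \bar R :=
  iid_expect P (fun S : n.-tuple (X * bool)%type => er P (A n S)).

Definition not_learnable_faster_than (R : realType) (d : measure_display)
  (X : measurableType d) (H : set (X -> bool)) (Rt : R -> R) : Prop :=
  forall A : forall n : nat, n.-tuple (X * bool)%type -> X -> bool,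
    learning_algorithm R A ->
    exists P : probability (X * bool)%type R, realizable H P /\
    exists C c : R, [/\ (0 < C)%R, (0 < c)%R &
      forall N : nat, exists2 n : nat, (N <= n)%N &
        (C * Rt (c * n%:R))%:E <= expected_error A P n].

(* Main.v *)
Require Import Defs.
From HB Require Import structures.
From mathcomp Require Import all_boot all_order all_algebra.
From mathcomp Require Import all_classical all_reals all_analysis.
From mathcomp Require Import measurable_realfun.
Import Order.TTheory GRing.Theory Num.Theory.
Local Open Scope classical_set_scope.
Local Open Scope ring_scope.
Local Open Scope ereal_scope.

Lemma int_mono d (T : measurableType d) (R : realType) (mu : {measure set T -> \bar R})
  (f g : T -> \bar R) : (forall x, 0 <= g x) -> (forall x, g x <= f x) ->
  \int[mu]_x g x <= \int[mu]_x f x.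
Proof.
move=> g0 gf.
have f0 : forall x, 0 <= f x by move=> x; exact: le_trans (g0 x) (gf x).
rewrite (ge0_integralTE _ g0) (ge0_integralTE _ f0).
apply: ereal_sup_le => _ [h /= hg <-]; exists h => //= x.
exact: le_trans (hg x) (gf x).
Qed.

Lemma int_lb d (T : measurableType d) (R : realType) (mu : {measure set T -> \bar R})
  (f : T -> \bar R) (Z : set T) (k : R) : measurable Z -> (0 <= k)%R ->
  (forall x, 0 <= f x) -> (forall x, Z x -> k%:E <= f x) ->
  k%:E * mu Z <= \int[mu]_x f x.
Proof.
move=> mZ k0 f0 fZ.
apply: le_trans (@int_mono _ _ _ mu f (fun x => k%:E * (\1_Z x)%:E) _ _).
- rewrite ge0_integralZl_EFin //.
  by rewrite integral_indic // setIT.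
- by apply/measurable_EFinP; exact: measurable_indic.
- by move=> x /=; apply: mule_ge0; rewrite lee_fin // indicE.
- move=> x; rewrite /indic; case: (boolP (x \in Z)) => [/set_mem /fZ|_] /=.
    by rewrite mule1.
  by rewrite mule0.
Qed.

Lemma iid_ge0 (R : realType) d (T : measurableType d) (P : probability T R) n
  (f : n.-tuple T -> \bar R) : (forall t, 0 <= f t) -> 0 <= iid_expect P f.
Proof.
elim: n f => [|n IH] f f0 /=; first exact: f0.
apply: integral_ge0 => z _; apply: IH => t; exact: f0.
Qed.

Lemma iid_lb (R : realType) d (T : measurableType d) (P : probability T R) (a : T)
  (hP : forall Z, measurable Z -> Z a -> (2^-1)%:E <= P Z) :
  forall n (f : n.-tuple T -> \bar R) (G : set (n.-tuple T)) (c : R), (0 <= c)%R ->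
  measurable G -> G (nseq_tuple n a) -> (forall t, 0 <= f t) ->
  (forall t, G t -> c%:E <= f t) -> (c / 2 ^+ n)%:E <= iid_expect P f.
Proof.
elim=> [|n IH] f G c c0 mG Ga f0 fG /=.
  rewrite expr0 divr1; apply: fG.
  by rewrite (tuple0 (nseq_tuple 0 a)) in Ga; rewrite (tuple0 [tuple]).
set Z := [set z | G [tuple of z :: nseq_tuple n a]].
have mZ : measurable Z.
  have mc : measurable_fun [set: T] (fun z => [tuple of z :: nseq_tuple n a]).
    by apply: measurable_cons => //; exact: measurable_cst.
  by have := mc measurableT G mG; rewrite setTI.
have ZA : Z a.
  rewrite /Z /=; suff -> : [tuple of a :: nseq_tuple n a] = nseq_tuple n.+1 a by [].
  by apply: val_inj.
have c'0 : (0 <= c / 2 ^+ n)%R by rewrite divr_ge0 // exprn_ge0.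
apply: le_trans (@int_lb _ _ _ P _ Z _ mZ c'0 _ _).
- apply: le_trans (lee_wpmul2l _ (hP _ mZ ZA)); last by rewrite lee_fin.
  by rewrite -EFinM lee_fin exprSr invfM mulrA.
- move=> z; apply: iid_ge0 => t; exact: f0.
- move=> z Zz; apply: (IH (fun t : n.-tuple T => f [tuple of z :: t]) [set t : n.-tuple T | G [tuple of z :: t]] c c0) => //.
  + have mc : measurable_fun [set: n.-tuple T] (fun t => [tuple of z :: t]).
      by apply: measurable_cons => //; exact: measurable_cst.
    by have := mc measurableT G mG; rewrite setTI.
  + by move=> t Gt; apply: fG.
Qed.

Definition P2 (R : realType) d (T : measurableType d) (a c : T) : probability T R :=
  mnormalize (measure_add (@dirac _ T a R) (@dirac _ T c R)) (@dirac _ T a R).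

Arguments P2 R {d T}.

Lemma mnormE (R : realType) d (T : measurableType d) (mu : {measure set T -> \bar R})
  (P : probability T R) (r : R) U : (0 < r)%R -> mu setT = r%:E ->
  mnormalize mu P U = mu U * (r^-1)%:E.
Proof.
move=> r0 h; rewrite /mnormalize h /=.
have -> : (r%:E == 0) = false by rewrite eqe gt_eqF.
by [].
Qed.

Lemma P2E (R : realType) d (T : measurableType d) (a c : T) U :
  P2 R a c U = ((a \in U)%:R + (c \in U)%:R)%:E * (2^-1)%:E.
Proof.
have h2 : measure_add (@dirac _ T a R) (@dirac _ T c R) setT = 2%:E.
  rewrite measure_addE; change ((\1_[set: T] a)%:E + (\1_[set: T] c)%:E = 2%:E :> \bar R); by rewrite !indicT.
have h := @mnormE R d T (measure_add (@dirac _ T a R) (@dirac _ T c R)) (@dirac _ T a R) 2 U (@ltr0Sn R 1) h2.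
rewrite /P2; apply: eq_trans h _.
apply: (eq_trans (congr1 (fun x => x * (2^-1)%:E) (measure_addE (@dirac _ T a R) (@dirac _ T c R) U))).
congr (_ * _); change ((\1_U a)%:E + (\1_U c)%:E = ((a \in U)%:R + (c \in U)%:R)%:E :> \bar R); by rewrite !indicE.
Qed.

Lemma P2_ge (R : realType) d (T : measurableType d) (a c : T) U :
  U a \/ U c -> (2^-1)%:E <= P2 R a c U.
Proof.
move=> h; rewrite P2E -EFinM lee_fin ler_peMl //.
case: h => [/mem_set ->|/mem_set ->]; rewrite /=.
  by rewrite lerDl.
by rewrite lerDr.
Qed.

Lemma P2_0 (R : realType) d (T : measurableType d) (a c : T) U :
  ~ U a -> ~ U c -> P2 R a c U = 0.
Proof.
by move=> ha hc; rewrite P2E (memNset ha) (memNset hc) /= addr0 mul0e.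
Qed.

Lemma bool3 (u w b : bool) : u != w -> (u == b) = false -> w = b.
Proof. by case: u; case: w; case: b. Qed.

Lemma nbb (b : bool) : (~~ b != b) = true.
Proof. by case: b. Qed.

Lemma neqb (u b : bool) : u != b -> u = ~~ b.
Proof. by case: u; case: b. Qed.

Lemma choose_b (v : nat -> bool) : exists b, forall N, exists2 n, (N <= n)%N & v n != b.
Proof.
case: (pselect (forall N, exists2 n, (N <= n)%N & v n = false)) => [h|h].
  by exists true => N; case: (h N) => n Nn vn; exists n => //; rewrite vn.
have [N0 hN0] : exists N0, ~ (exists2 n, (N0 <= n)%N & v n = false).
  by apply: contrapT => hh; apply: h => N; apply: contrapT => hN; apply: hh; exists N.

exists false => N; exists (maxn N N0); first exact: leq_maxl.
case E: (v _) => //; exfalso; apply: hN0; exists (maxn N N0) => //.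
exact: leq_maxr.
Qed.

Lemma exists_pair (X : Type) (H : set (X -> bool))
  (H_card : exists h1 h2 h3, [/\ H h1, H h2, H h3 & [/\ h1 <> h2, h1 <> h3 & h2 <> h3]]) :
  exists ha hb x x', [/\ H ha, H hb, ha x = hb x & ha x' != hb x'].
Proof.
case: H_card => h1 [h2 [h3 [H1 H2 H3 [n12 n13 n23]]]].
have diff : forall f g : X -> bool, f <> g -> exists x, f x != g x.
  move=> f g fg; apply: contrapT => hn; apply: fg; apply: funext => x.
  apply/eqP; apply: contrapT => hx; apply: hn; exists x; exact/negP.
case: (pselect (exists x, h1 x = h2 x)) => [[x e]|no12].
  by case: (diff _ _ n12) => x' hx'; exists h1, h2, x, x'.
case: (pselect (exists x, h1 x = h3 x)) => [[x e]|no13].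
  by case: (diff _ _ n13) => x' hx'; exists h1, h3, x, x'.
exfalso; apply: n23; apply: funext => x.
move: (fun e : h1 x = h2 x => no12 (ex_intro _ x e)) (fun e : h1 x = h3 x => no13 (ex_intro _ x e)).
case: (h1 x); case: (h2 x); case: (h3 x) => // A B; exfalso;
  first [exact: A erefl | exact: B erefl].
Qed.

Lemma part1 (R : realType) (d : measure_display) (X : measurableType d)
  (H : set (X -> bool))
  (H_meas : forall h, H h -> measurable_fun [set: X] h)
  (H_card : exists h1 h2 h3, [/\ H h1, H h2, H h3 & [/\ h1 <> h2, h1 <> h3 & h2 <> h3]]) :
  (forall A : forall n : nat, n.-tuple (X * bool)%type -> X -> bool,
    learning_algorithm R A ->
    exists P : probability (X * bool)%type R, realizable H P /\
      forall N : nat, exists2 n : nat, (N <= n)%N &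
        ((2%:R : R) ^- n.+2)%:E <= expected_error A P n).
Proof.
move=> A hA.
have [ha [hb [x [x' [Ha Hb e dif]]]]] := @exists_pair X H H_card.
set y := ha x.
have [b hv] := choose_b (fun n => A n (nseq_tuple n (x, y)) x').
set P := P2 R (x, y) (x', b).
exists P; split.
  have [h0 [H0 h0x h0x']] : exists h0, [/\ H h0, h0 x = y & h0 x' = b].
    case E: (ha x' == b); first by exists ha; split => //; exact/eqP.
    by exists hb; split; [exact: Hb | rewrite /y e | exact: bool3 dif E].
  have m1 : forall v, measurable [set z : X * bool | h0 z.1 = v].
    move=> v; have := (measurableT_comp (H_meas _ H0) (@measurable_fst _ _ X bool)) measurableT [set v] I.
    by rewrite setTI.
  have m2 : forall v, measurable [set z : X * bool | z.2 = v].
    move=> v; have := (@measurable_snd _ _ X bool) measurableT [set v] I.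
    by rewrite setTI.
  set N := [set z : X * bool | h0 z.1 != z.2].
  have mN : measurable N.
    have -> : N = ([set z : X * bool | h0 z.1 = true] `&` [set z | z.2 = false]) `|`
                 ([set z : X * bool | h0 z.1 = false] `&` [set z | z.2 = true]).
      apply/seteqP; split => -[u w] /=; rewrite /N /=;
        case: (h0 u); case: w => //=; try by [left | right];
        by move=> [[]|[]].
    by apply: measurableU; apply: measurableI.
  have er0 : er P h0 = 0.
    rewrite /er (eq_integral (fun z => (\1_N z)%:E)); last first.
      move=> z _; rewrite indicE; case: (boolP (h0 z.1 != z.2)) => hz.
        by rewrite mem_set.
      by rewrite memNset //; apply/negP.
    rewrite integral_indic // setIT; apply: P2_0.
      by rewrite /N /= h0x eqxx.
    by rewrite /N /= h0x' eqxx.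
  rewrite /realizable; apply/eqP; rewrite eq_le; apply/andP; split.
    by rewrite -er0; apply: ereal_inf_lbound; exists h0.
  apply: le_ereal_inf_tmp => _ [h _ <-]; apply: integral_ge0 => z _.
  by rewrite lee_fin.
move=> N; have [n Nn vn] := hv N; exists n => //.
set S0 := nseq_tuple n (x, y).
have [A1 [A2 [mA1 mA2 s1 s2 m0]]] := hA n (@dirac _ _ (S0, x') R) [set ~~ b] I.
have inA1 : A1 (S0, x').
  apply: contrapT => nA1.
  have hin : (A2 `\` A1) (S0, x').
    split => //; apply: s2; rewrite /preimage /=; exact: neqb.
  move: m0; change (((\1_(A2 `\` A1) (S0, x') : R))%:E = 0%:E -> False).
  by rewrite indicE mem_set //= => /eqP; rewrite eqe oner_eq0.
set G := [set S | A1 (S, x')].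
have mG : measurable G.
  have := (@pair2_measurable _ _ _ _ x') measurableT A1 mA1.
  by rewrite setTI.
have hP : forall Z, measurable Z -> Z (x, y) -> (2^-1)%:E <= P Z.
  by move=> Z _ Zxy; apply: P2_ge; left.
have f0 : forall S, 0 <= er P (A n S).
  by move=> S; apply: integral_ge0 => z _; rewrite lee_fin.
have fG : forall S, G S -> (2^-1)%:E <= er P (A n S).
  move=> S GS.
  set K := [set z : X * bool | A1 (S, z.1) /\ z.2 = b].
  have mK : measurable K.
    have -> : K = ((fun z : X * bool => (S, z.1)) @^-1` A1) `&` (snd @^-1` [set b]).
      by apply/seteqP; split => z.
    apply: measurableI.
      have := (measurableT_comp (@pair1_measurable _ _ _ _ S) (@measurable_fst _ _ X bool))
         measurableT A1 mA1.
      by rewrite setTI.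
    have := (@measurable_snd _ _ X bool) measurableT [set b] I.
    by rewrite setTI.
  have := @int_lb _ _ _ P (fun z => ((A n S z.1 != z.2)%:R)%:E) K 1 mK ler01.
  move=> h; apply: le_trans (h _ _); last 2 first.
  - by move=> z; rewrite lee_fin.
  - move=> z [Az zb]; have := s1 _ Az; rewrite /preimage /= => ->.
    by rewrite zb nbb.
  rewrite mul1e; apply: P2_ge; right; split => //.
have := @iid_lb R _ _ P (x, y) hP n (fun S => er P (A n S)) G (2^-1) _ mG inA1 f0 fG.
move=> h; apply: le_trans (h _); last by rewrite invr_ge0.
rewrite lee_fin !exprSr !invfM mulrC.
have t0 : (0 <= (2:R) ^+ n)%R by rewrite exprn_ge0.
have : (0 <= (2:R) ^- n)%R by rewrite invr_ge0 exprn_ge0.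
set t := ((2:R) ^- n).
move=> t1; rewrite ler_pM2l ?invr_gt0 //.
by rewrite ler_pdivrMr // ler_peMr // ler1n.
Qed.

Theorem mainTheorem7 (R : realType) (d : measure_display) (X : measurableType d)
  (H : set (X -> bool))
  (H_meas : forall h, H h -> measurable_fun [set: X] h)
  (H_card : exists h1 h2 h3, [/\ H h1, H h2, H h3 & [/\ h1 <> h2, h1 <> h3 & h2 <> h3]]) :
  (forall A : forall n : nat, n.-tuple (X * bool)%type -> X -> bool,
    learning_algorithm R A ->
    exists P : probability (X * bool)%type R, realizable H P /\
      forall N : nat, exists2 n : nat, (N <= n)%N &
        ((2%:R : R) ^- n.+2)%:E <= expected_error A P n)
  /\ not_learnable_faster_than H (fun t : R => expR (- t)).
Proof.
have p1 := @part1 R d X H H_meas H_card.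
split => //.
move=> A hA; have [P [rP hn]] := p1 A hA.
exists P; split => //; exists (4^-1)%R, (ln 2); split.
- by rewrite invr_gt0.
- by rewrite ln_gt0 // ltr1n.
move=> N; have [n Nn h] := hn N; exists n => //; apply: le_trans h.
rewrite lee_fin expRN expRM_natr lnK; last by rewrite posrE.
suff -> : ((2:R) ^- n.+2 = 4^-1 / 2 ^+ n)%R by [].
rewrite !exprSr -mulrA invfM mulrC.
by rewrite -natrM.
Qed.
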